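(* Let $S$ be an entropy function for a finite set $X$. Given functions $\mu,\nu:2^X\to[0,\infty)$, there exist functions $\mu',\nu':2^X\to[0,\infty)$ with non-overlapping supports (i.e. $\mu'(A)>0$ and $\nu'(B)>0$ imply $A\cap B=\emptyset$) such that $\phi_{\mu'}-\phi_{\nu'}=\phi_\mu-\phi_\nu$ and \[\sum_{A\subseteq X}(\mu'(A)+\nu'(A))S(A)\le\sum_{A\subseteq X}(\mu(A)+\nu(A))S(A).\]
   Context: An entropy function for a finite set $X$ is a function $S:2^X\to[0,\infty)$ with $S(\emptyset)=0$, $S(A)+S(B)\ge S(A\cap B)+S(A\cup B)$ and $S(A)+S(B)\ge S(A\setminus B)+S(B\setminus A)$ for all $A,B\subseteq X$. For $\mu:2^X\to\mathbb R$, $\phi_\mu:X\to\mathbb R$ is defined by $\phi_\mu(x):=\sum_{A\ni x}\mu(A)$. *)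

(* Defs.v *)
From HB Require Import structures.
From mathcomp Require Import all_boot all_order all_algebra.
From mathcomp Require Import reals.
Set Implicit Arguments. Unset Strict Implicit. Unset Printing Implicit Defensive.
Import Order.TTheory GRing.Theory Num.Theory.
Local Open Scope ring_scope.

Definition entropy_function (R : realType) (X : finType) (S : {set X} -> R) : Prop :=
  [/\ S set0 = 0,
      (forall A, 0 <= S A),
      (forall A B, S (A :&: B) + S (A :|: B) <= S A + S B) &
      (forall A B, S (A :\: B) + S (B :\: A) <= S A + S B)].

Definition phi (R : realType) (X : finType) (mu : {set X} -> R) (x : X) : R :=
  \sum_(A : {set X} | x \in A) mu A.

(* Main.v *)
Require Import Defs.
From HB Require Import structures.
From mathcomp Require Import all_boot all_order all_algebra.
From mathcomp Require Import reals.
From mathcomp Require Import ring lra zify.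
Import Order.TTheory GRing.Theory Num.Theory.
Set Implicit Arguments. Unset Strict Implicit.
Local Open Scope ring_scope.

Definition upd (R : realType) (X : finType) (m : {set X} -> R) (D : {set X}) (c : R) :=
  fun C => m C + (if C == D then c else 0).

Lemma phi_upd (R : realType) (X : finType) (m : {set X} -> R) D c y :
  phi (upd m D c) y = phi m y + (if y \in D then c else 0).
Proof.
rewrite /phi /upd big_split /=; congr (_ + _).
rewrite -big_mkcondr /=.
case: ifP => yD.
  rewrite (eq_bigl (pred1 D)) ?big_pred1_eq // => C /=.
  by case: eqP => [->|]; rewrite ?yD ?andbF ?andbT.
rewrite big_pred0 // => C; case: eqP => [->|]; by rewrite ?yD ?andbF.
Qed.

Lemma sum_upd (R : realType) (X : finType) (S : {set X} -> R) (m : {set X} -> R) D c :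
  \sum_C upd m D c C * S C = \sum_C m C * S C + c * S D.
Proof.
rewrite /upd; under eq_bigr do rewrite mulrDl.
rewrite big_split /=; congr (_ + _).
rewrite (bigD1 D) //= eqxx big1 ?addr0 // => C /negbTE ->; by rewrite mul0r.
Qed.

Definition good (R : realType) (X : finType) (S : {set X} -> R) (mu nu mu' nu' : {set X} -> R) :=
  [/\ (forall A, 0 <= mu' A), (forall A, 0 <= nu' A),
      (forall x, phi mu' x - phi nu' x = phi mu x - phi nu x) &
      \sum_(A : {set X}) (mu' A + nu' A) * S A
          <= \sum_(A : {set X}) (mu A + nu A) * S A].

Lemma good_trans (R : realType) (X : finType) (S : {set X} -> R) m1 n1 m2 n2 m3 n3 :
  good S m1 n1 m2 n2 -> good S m2 n2 m3 n3 -> good S m1 n1 m3 n3.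
Proof.
move=> [_ _ h1 c1] [p q h2 c2]; split => //.
  by move=> x; rewrite h2 h1.
exact: le_trans c2 c1.
Qed.

Definition PY (R : realType) (X : finType) (Y : {set X}) (mu nu : {set X} -> R) :=
  forall C D, 0 < mu C -> 0 < nu D -> C :&: D \subset Y.

Definition cnt (R : realType) (X : finType) (x : X) (m : {set X} -> R) :=
  #|[set C : {set X} | (x \in C) && (0 < m C)]|.

Lemma upd2E (R : realType) (X : finType) (m : {set X} -> R) A D t C :
  upd (upd m A (-t)) D t C = m C - (if C == A then t else 0) + (if C == D then t else 0).
Proof. by rewrite /upd; case: (C == A); rewrite ?oppr0. Qed.

Lemma step (R : realType) (X : finType) (S : {set X} -> R) (hS : entropy_function S)
  (mu nu : {set X} -> R) (A B : {set X}) (x : X) :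
  (forall C, 0 <= mu C) -> (forall C, 0 <= nu C) -> 0 < mu A -> 0 < nu B ->
  x \in A -> x \in B ->
  exists mu1 nu1, [/\ good S mu nu mu1 nu1, (forall Y, PY Y mu nu -> PY Y mu1 nu1) &
     (cnt x mu1 + cnt x nu1 < cnt x mu + cnt x nu)%N].
Proof.
move=> hmu hnu muA nuB xA xB.
pose t := Num.min (mu A) (nu B).
have tA : t <= mu A by rewrite ge_min lexx.
have tB : t <= nu B by rewrite ge_min lexx orbT.
have t0 : 0 < t by rewrite lt_min muA nuB.
have xAB : x \notin A :\: B by rewrite !inE xB.
have xBA : x \notin B :\: A by rewrite !inE xA.
have nAB : (A == A :\: B) = false by apply/negbTE; apply: contraNneq xAB => <-.
have nBA : (B == B :\: A) = false by apply/negbTE; apply: contraNneq xBA => <-.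
exists (upd (upd mu A (-t)) (A :\: B) t), (upd (upd nu B (-t)) (B :\: A) t).
have pos1 : forall (m : {set X} -> R) E D, (forall C, 0 <= m C) -> t <= m E ->
   (E == D) = false -> forall C, 0 <= upd (upd m E (-t)) D t C.
  move=> m E D hm tE ED C; rewrite upd2E.
  case: eqP => [|CE]; first by move=> CE; rewrite CE ED addr0 subr_ge0.
  rewrite subr0; apply: addr_ge0 => //; case: ifP => // _; exact: ltW.
have supp1 : forall (m : {set X} -> R) E D C, 0 < upd (upd m E (-t)) D t C ->
   0 < m C \/ C = D.
  move=> m E D C; rewrite upd2E.
  have [->|CD] := eqVneq C D; first by right.
  rewrite addr0 => h; left; apply: lt_le_trans h _.
  by rewrite lerBlDr lerDl; case: ifP => // _; exact: ltW.
split.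
- split.
  + exact: pos1.
  + exact: pos1.
  + move=> y; rewrite !phi_upd !inE.
    by case: (y \in A); case: (y \in B) => /=; lra.
  + under eq_bigr do rewrite mulrDl.
    rewrite big_split /= !sum_upd.
    rewrite [X in _ <= X](_ : _ = \sum_i mu i * S i + \sum_i nu i * S i); last first.
      by rewrite -big_split /=; apply: eq_bigr => i _; rewrite mulrDl.
    case: hS => _ _ _ /(_ A B) hAB.
    have := ler_wpM2l (ltW t0) hAB.
    rewrite !mulrDr; lra.
- move=> Y hY C D /supp1 [hC|->] /supp1 [hD|->].
  + exact: hY.
  + apply: subset_trans (hY _ _ hC nuB); apply/subsetP => z; rewrite !inE.
    by case/and3P => -> _ ->.
  + apply: subset_trans (hY _ _ muA hD); apply/subsetP => z; rewrite !inE.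
    by case/andP => /andP [_ ->] ->.
  + apply/subsetP => z; rewrite !inE; by case: (z \in A); case: (z \in B).
- have sub1 : forall (m : {set X} -> R) (E D : {set X}), x \notin D ->
     [set C : {set X} | (x \in C) && (0 < upd (upd m E (-t)) D t C)] \subset
     [set C : {set X} | (x \in C) && (0 < m C)].
    move=> m E D xD; apply/subsetP => C; rewrite !inE => /andP [xC /supp1 [->|CD]].
      by rewrite xC.
    by move: xD; rewrite -CD xC.
  have pro1 : forall (m : {set X} -> R) (E D : {set X}), x \notin D -> x \in E -> 0 < m E ->
     t = m E -> (E == D) = false ->
     [set C : {set X} | (x \in C) && (0 < upd (upd m E (-t)) D t C)] \proper
     [set C : {set X} | (x \in C) && (0 < m C)].
    move=> m E D xD xE mE tE ED; apply/properP; split; first exact: sub1.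
    exists E; first by rewrite inE xE mE.
    by rewrite inE xE upd2E eqxx ED addr0 tE subrr ltxx.
  rewrite /cnt.
  have s1 := subset_leq_card (sub1 mu A _ xAB).
  have s2 := subset_leq_card (sub1 nu B _ xBA).
  case: (lerP (mu A) (nu B)) => h.
    have tE : t = mu A by rewrite /t min_l.
    have := proper_card (pro1 mu A _ xAB xA muA tE nAB).
    lia.
  have tE : t = nu B by rewrite /t min_r // ltW.
  have := proper_card (pro1 nu B _ xBA xB nuB tE nBA).
  lia.
Qed.

Lemma good_refl (R : realType) (X : finType) (S : {set X} -> R) (mu nu : {set X} -> R) :
  (forall C, 0 <= mu C) -> (forall C, 0 <= nu C) -> good S mu nu mu nu.
Proof. by move=> h1 h2; split. Qed.

Lemma inner (R : realType) (X : finType) (S : {set X} -> R) (hS : entropy_function S)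
  (x : X) (Y : {set X}) n : forall (mu nu : {set X} -> R),
  (cnt x mu + cnt x nu <= n)%N -> (forall C, 0 <= mu C) -> (forall C, 0 <= nu C) ->
  PY Y mu nu -> exists mu' nu', good S mu nu mu' nu' /\ PY (Y :\ x) mu' nu'.
Proof.
elim: n => [|n IH] mu nu hc hmu hnu hY;
  (case: (boolP [exists A : {set X}, exists B : {set X},
      [&& x \in A, x \in B, 0 < mu A & 0 < nu B]]) => [/existsP [A /existsP [B]]|hno];
   [case/and4P => xA xB muA nuB;
    have [mu1 [nu1 [g1 p1 c1]]] := step hS hmu hnu muA nuB xA xB |
    exists mu, nu; split; first exact: good_refl;
    move=> C D hC hD; apply/subsetP => z zCD; rewrite !inE (subsetP (hY _ _ hC hD)) // andbT;
    apply: contraNneq hno => zx; apply/existsP; exists C; apply/existsP; exists D;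
    move: zCD; rewrite inE zx => /andP [-> ->]; rewrite hC hD]).
  all: try lia.
have [mu2 [nu2 [g2 p2]]] : exists mu' nu', good S mu1 nu1 mu' nu' /\ PY (Y :\ x) mu' nu'.
  apply: IH; first by lia.
  - by case: g1.
  - by case: g1.
  - exact: p1.
exists mu2, nu2; split => //; exact: good_trans g2.
Qed.

Lemma outer (R : realType) (X : finType) (S : {set X} -> R) (hS : entropy_function S) n :
  forall (Y : {set X}) (mu nu : {set X} -> R),
  (#|Y| <= n)%N -> (forall C, 0 <= mu C) -> (forall C, 0 <= nu C) ->
  PY Y mu nu -> exists mu' nu', good S mu nu mu' nu' /\ PY set0 mu' nu'.
Proof.
elim: n => [|n IH] Y mu nu hc hmu hnu hY.
  exists mu, nu; split; first exact: good_refl.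
  by move: hc; rewrite leqn0 cards_eq0 => /eqP Y0; rewrite -Y0.
have [Y0|/set0Pn [x xY]] := eqVneq Y set0.
  by exists mu, nu; split; [exact: good_refl | rewrite -Y0].
have [mu1 [nu1 [g1 p1]]] := @inner _ _ _ hS x Y _ mu nu (leqnn _) hmu hnu hY.
have [mu2 [nu2 [g2 p2]]] : exists mu' nu', good S mu1 nu1 mu' nu' /\ PY set0 mu' nu'.
  apply: (IH (Y :\ x)).
  - by move: hc; rewrite (cardsD1 x Y) xY.
  - by case: g1.
  - by case: g1.
  - exact: p1.
exists mu2, nu2; split => //; exact: good_trans g2.
Qed.

Theorem lemma30 (R : realType) (X : finType) (S : {set X} -> R)
  (hS : entropy_function S) (mu nu : {set X} -> R)
  (hmu : forall A, 0 <= mu A) (hnu : forall A, 0 <= nu A) :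
  exists mu' nu' : {set X} -> R,
    [/\ (forall A, 0 <= mu' A), (forall A, 0 <= nu' A),
        (forall A B, 0 < mu' A -> 0 < nu' B -> A :&: B = set0),
        (forall x, phi mu' x - phi nu' x = phi mu x - phi nu x) &
        \sum_(A : {set X}) (mu' A + nu' A) * S A
          <= \sum_(A : {set X}) (mu A + nu A) * S A].
Proof.
have [mu' [nu' [[h1 h2 h3 h4] p]]] := outer hS (leqnn #|[set: X]|) hmu hnu
  (fun C D _ _ => subsetT _).
exists mu', nu'; split => // A B hA hB.
by apply/eqP; rewrite -subset0; exact: p.
Qed.
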